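(* Let $K$ be a finite-dimensional Kantor triple system over $\Bbbk\in\{\mathbb{R},\mathbb{C}\}$, $L$ the span of the operators $\langle u,v\rangle$ on $K$, and for $a,b\in K$ let $\tilde K_{ab}:K\oplus L\to K\oplus L$ be $\tilde K_{ab}(z+Z)=-\tfrac16(z\,\langle a,b\rangle(z)\,z)-\tfrac12 Z(\langle a,b\rangle(z))+\tfrac1{12}\langle (z\,\langle a,b\rangle(z)\,z),z\rangle+\tfrac12\langle Z(a),Z(b)\rangle$ ($z\in K$, $Z\in L$). If $a,b,c,d\in K$ satisfy $\langle a,b\rangle=\langle c,d\rangle$ (as operators on $K$), then $\tilde K_{ab}=\tilde K_{cd}$.
   Context: A triple system is a vector space with trilinear product $(xyz)$; $\langle u,v\rangle$ denotes the linear operator $z\mapsto(uzv)-(vzu)$. A Kantor triple system (KTS) satisfies, for all $u,v,x,y,z$: $(uv(xyz))-(xy(uvz))=((uvx)yz)-(x(vuy)z)$ and $\langle\langle u,v\rangle(x),y\rangle=\langle (yxu),v\rangle-\langle (yxv),u\rangle$. *)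

(* Defs.v *)
From HB Require Import structures.
From mathcomp Require Import all_boot all_algebra.
From mathcomp Require Import reals Rstruct.
From mathcomp.real_closed Require Import complex.

Set Implicit Arguments.
Unset Strict Implicit.
Unset Printing Implicit Defensive.

Import GRing.Theory.
Local Open Scope ring_scope.

Inductive ground_field := RealField | ComplexField.

Definition scalars (g : ground_field) : fieldType :=
  match g with
  | RealField => Rdefinitions.R
  | ComplexField => complex Rdefinitions.R
  end.

Section KTS.
Variables (F : fieldType) (K : vectType F).
Variable t : K -> K -> K -> K.

Definition trilinear : Prop :=
  (forall y z, linear (fun x => t x y z)) /\
  (forall x z, linear (fun y => t x y z)) /\
  (forall x y, linear (fun z => t x y z)).

Definition br (u v : K) : K -> K := fun z => t u z v - t v z u.

Definition is_KTS : Prop :=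
  trilinear /\
  (forall u v x y z,
      t u v (t x y z) - t x y (t u v z) = t (t u v x) y z - t x (t v u y) z) /\
  (forall u v x y w,
      br (br u v x) y w = br (t y x u) v w - br (t y x v) u w).

Definition inL (Z : K -> K) : Prop :=
  exists s : seq (F * K * K),
    forall w, Z w = \sum_(p <- s) p.1.1 *: br p.1.2 p.2 w.

(* \tilde K_{ab}(z + Z), returned as the pair (K-component, L-component) *)
Definition Ktilde (a b : K) (z : K) (Z : K -> K) : K * (K -> K) :=
  ( - (6%:R^-1) *: t z (br a b z) z - (2%:R^-1) *: Z (br a b z),
    fun w => (12%:R^-1) *: br (t z (br a b z) z) z w
             + (2%:R^-1) *: br (Z a) (Z b) w ).

End KTS.

(* Main.v *)
Require Import Defs.
From HB Require Import structures.
From mathcomp Require Import all_boot all_algebra.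
From mathcomp Require Import reals Rstruct.
From mathcomp.real_closed Require Import complex.
From mathcomp Require Import ring.
From Stdlib Require Import FunctionalExtensionality.
Local Open Scope ring_scope.
Import GRing.Theory Num.Theory.

Section Lin.
Variables (F : fieldType) (K : vectType F).

Lemma coord_inj (x y : K) :
  (forall i, coord (vbasis (fullv : {vspace K})) i x = coord (vbasis fullv) i y) -> x = y.
Proof.
move=> h; rewrite (coord_vbasis (memvf x)) (coord_vbasis (memvf y)).
by apply: eq_bigr => i _; rewrite h.
Qed.

Variable f : K -> K.
Hypothesis hf : linear f.
Lemma lin0 : f 0 = 0.
Proof.
have := hf 1 0 0; rewrite !scale1r addr0 => /esym/eqP.
by rewrite -subr_eq0 addrK => /eqP.
Qed.
Lemma linD x y : f (x + y) = f x + f y.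
Proof. by have := hf 1 x y; rewrite !scale1r => ->. Qed.
Lemma linZ a x : f (a *: x) = a *: f x.
Proof. by have := hf a x 0; rewrite !addr0 lin0 addr0 => ->. Qed.
Lemma linN x : f (- x) = - f x.
Proof. by rewrite -scaleN1r linZ scaleN1r. Qed.
Lemma linB x y : f (x - y) = f x - f y.
Proof. by rewrite linD linN. Qed.
End Lin.
Arguments lin0 {F K f}. Arguments linD {F K f}. Arguments linZ {F K f}. Arguments linN {F K f}. Arguments linB {F K f}.

Lemma eqD (V : zmodType) (a b c d : V) : a = b -> c = d -> a + c = b + d.
Proof. by move=> -> ->. Qed.
Lemma eqN (V : zmodType) (a b : V) : a = b -> - a = - b.
Proof. by move=> ->. Qed.

Arguments eqD {V a b c d}. Arguments eqN {V a b}.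
Ltac lhs_of h := lazymatch type of h with ?x = _ => x end.
Ltac rhs_of h := lazymatch type of h with _ = ?x => x end.

Section KTSproof.
Variables (F : fieldType) (K : vectType F) (t : K -> K -> K -> K).
Hypothesis hK : is_KTS t.

Let l1 y z : linear (fun x => t x y z) := hK.1.1 y z.
Let l2 x z : linear (fun y => t x y z) := hK.1.2.1 x z.
Let l3 x y : linear (fun z => t x y z) := hK.1.2.2 x y.
Let I1 := hK.2.1.
Let I2 := hK.2.2.

Lemma tD1 x x' y z : t (x + x') y z = t x y z + t x' y z. Proof. exact: (linD (l1 y z)). Qed.
Lemma tD2 x y y' z : t x (y + y') z = t x y z + t x y' z. Proof. exact: (linD (l2 x z)). Qed.
Lemma tD3 x y z z' : t x y (z + z') = t x y z + t x y z'. Proof. exact: (linD (l3 x y)). Qed.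
Lemma tB1 x x' y z : t (x - x') y z = t x y z - t x' y z. Proof. exact: (linB (l1 y z)). Qed.
Lemma tB2 x y y' z : t x (y - y') z = t x y z - t x y' z. Proof. exact: (linB (l2 x z)). Qed.
Lemma tB3 x y z z' : t x y (z - z') = t x y z - t x y z'. Proof. exact: (linB (l3 x y)). Qed.
Lemma tN1 x y z : t (- x) y z = - t x y z. Proof. exact: (linN (l1 y z)). Qed.
Lemma tN2 x y z : t x (- y) z = - t x y z. Proof. exact: (linN (l2 x z)). Qed.
Lemma tN3 x y z : t x y (- z) = - t x y z. Proof. exact: (linN (l3 x y)). Qed.
Lemma tZ1 a x y z : t (a *: x) y z = a *: t x y z. Proof. exact: (linZ (l1 y z)). Qed.
Lemma tZ2 a x y z : t x (a *: y) z = a *: t x y z. Proof. exact: (linZ (l2 x z)). Qed.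
Lemma tZ3 a x y z : t x y (a *: z) = a *: t x y z. Proof. exact: (linZ (l3 x y)). Qed.
Lemma t01 y z : t 0 y z = 0. Proof. exact: (lin0 (l1 y z)). Qed.
Lemma t02 x z : t x 0 z = 0. Proof. exact: (lin0 (l2 x z)). Qed.
Lemma t03 x y : t x y 0 = 0. Proof. exact: (lin0 (l3 x y)). Qed.

Ltac texp := rewrite ?/br ?(tD1, tD2, tD3, tB1, tB2, tB3, tN1, tN2, tN3, tZ1, tZ2, tZ3, t01, t02, t03).

Ltac kcomb e :=
  let i := fresh "i" in
  apply: coord_inj => i;
  move: (congr1 (coord (vbasis (fullv : {vspace K})) i) e);
  rewrite ?(linearB, linearD, linearN, linearZ, linear0) /=;
  let e' := fresh "e" in move=> e';
  let l := lhs_of e' in let r := rhs_of e' in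
  apply/eqP; rewrite -subr_eq0; apply/eqP;
  transitivity (l - r); [ring | by rewrite e' subrr].

Lemma Ebas u v x y z : br t (br t u v x) y z = t y x (br t u v z) + br t u v (t x y z).
Proof.
have e := eqD (I2 u v x y z) (eqD (eqN (I1 y x u z v)) (I1 y x v z u)).
texp; move: e; texp => e; kcomb e.
Qed.

Lemma R1bas p q a b w : br t a b (br t p q w) = t b (br t p q a) w - t a (br t p q b) w.
Proof.
have e := eqD (eqN (I2 a b p w q)) (eqD (I2 a b q w p)
  (eqD (eqN (I1 a p b q w)) (eqD (I1 a q b p w) (eqD (I1 b p a q w)
  (eqD (eqN (I1 b q a p w)) (eqD (I1 w p a q b) (eqD (eqN (I1 w p b q a))
  (eqD (eqN (I1 w q a p b)) (I1 w q b p a))))))))).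
texp; move: e; texp => e; kcomb e.
Qed.

Lemma R2bas p q a b w : br t p q (br t a b w) = t (br t p q a) b w - t (br t p q b) a w.
Proof.
have e := eqD (eqN (I2 p q a w b)) (eqD (I2 p q b w a)
  (eqD (I1 w a p b q) (eqD (eqN (I1 w a q b p)) (eqD (eqN (I1 w b p a q))
  (I1 w b q a p))))).
texp; move: e; texp => e; kcomb e.
Qed.

Lemma EZ Z (hZ : inL t Z) x y z : br t (Z x) y z = t y x (Z z) + Z (t x y z).
Proof.
case: hZ => s hZ; rewrite !hZ.
elim: s {hZ} => [|[[l u] v] s IH]; rewrite ?big_nil ?big_cons /=.
  by texp; rewrite subrr addr0.
have e := eqD (congr1 (fun w => l *: w) (Ebas u v x y z)) IH.
texp; move: e; texp => e; kcomb e.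
Qed.

Lemma R1Z Z (hZ : inL t Z) a b w : br t a b (Z w) = t b (Z a) w - t a (Z b) w.
Proof.
case: hZ => s hZ; rewrite !hZ.
elim: s {hZ} => [|[[l u] v] s IH]; rewrite ?big_nil ?big_cons /=.
  by texp; kcomb (erefl (0:K)).
have e := eqD (congr1 (fun w => l *: w) (R1bas u v a b w)) IH.
texp; move: e; texp => e; kcomb e.
Qed.

Lemma R2Z Z (hZ : inL t Z) a b w : Z (br t a b w) = t (Z a) b w - t (Z b) a w.
Proof.
case: hZ => s hZ; rewrite !hZ.
elim: s {hZ} => [|[[l u] v] s IH]; rewrite ?big_nil ?big_cons /=.
  by texp; kcomb (erefl (0:K)).
have e := eqD (congr1 (fun w => l *: w) (R2bas u v a b w)) IH.
texp; move: e; texp => e; kcomb e.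
Qed.

Lemma ZB Z (hZ : inL t Z) x y : Z (x - y) = Z x - Z y.
Proof.
case: hZ => s hZ; rewrite !hZ.
elim: s {hZ} => [|[[l u] v] s IH]; rewrite ?big_nil ?big_cons /=.
  by rewrite subrr.
move: IH; texp => e; kcomb e.
Qed.

Lemma key Z (hZ : inL t Z) a b w :
  br t (Z a) (Z b) w - br t (Z b) (Z a) w = - (Z (br t a b (Z w)) + Z (br t a b (Z w))).
Proof.
rewrite (EZ _ hZ a) (EZ _ hZ b).
rewrite {1}(R1Z _ hZ a b w) (ZB _ hZ) (R2Z _ hZ).
kcomb (erefl (0:K)).
Qed.

Lemma quad Z (hZ : inL t Z) (two : (2%:R : F) != 0) a b w :
  br t (Z a) (Z b) w = - Z (br t a b (Z w)).
Proof.
have h := key _ hZ a b w.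
have anti : br t (Z b) (Z a) w = - br t (Z a) (Z b) w by rewrite /br opprB.
rewrite anti opprK in h.
apply: (scalerI two); rewrite !scaler_nat !mulr2n h.
by rewrite ?opprD.
Qed.

End KTSproof.

Lemma two_nz g : (2%:R : scalars g) != 0.
Proof. by case: g => /=; rewrite pnatr_eq0. Qed.

Theorem mainTheorem9 (g : ground_field) (K : vectType (scalars g))
    (t : K -> K -> K -> K) (hK : is_KTS t) (a b c d : K) :
  br t a b =1 br t c d ->
  forall (z : K) (Z : K -> K), inL t Z ->
    Ktilde t a b z Z = Ktilde t c d z Z.
Proof.
move=> H z Z hZ; rewrite /Ktilde; congr pair; first by rewrite H.
apply: functional_extensionality => w.
by rewrite (quad _ _ _ hK _ hZ (two_nz g) a b) (quad _ _ _ hK _ hZ (two_nz g) c d) !H.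
Qed.
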